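(* Let $L$ be a distributive lattice. If $L$ is countably order bounded, then $\mathrm{FVL}\langle L\rangle$ is order dense in $\mathrm{FBL}\langle L\rangle$. If moreover $L$ is totally ordered, the converse holds: if $\mathrm{FVL}\langle L\rangle$ is order dense in $\mathrm{FBL}\langle L\rangle$, then $L$ is countably order bounded.
   Context: $L^*$ is the set of all lattice homomorphisms $x^*:L\to[-1,1]$; for $x\in L$, $\delta_x:L^*\to\mathbb R$ is $\delta_x(x^* )=x^*(x)$. A function $f:L^*\to\mathbb R$ is positively homogeneous if $f(\lambda x^* )=\lambda f(x^* )$ whenever $\lambda\ge0$ and $\lambda x^*\in L^*$; for such $f$, $\|f\|=\sup\{\sum_{i=1}^m|f(x_i^* )|: m\in\mathbb N,\ x_i^*\in L^*,\ \sup_{x\in L}\sum_{i=1}^m|x_i^*(x)|\le1\}$. $\mathrm{FVL}\langle L\rangle$ is the vector sublattice generated by $\{\delta_x:x\in L\}$ (pointwise operations), and $\mathrm{FBL}\langle L\rangle$ is its norm closure inside the Banach lattice of positively homogeneous functions with finite norm, ordered pointwise. $\mathrm{FVL}\langle L\rangle$ is order dense in $\mathrm{FBL}\langle L\rangle$ if for every $f\in\mathrm{FBL}\langle L\rangle$ with $f>0$ there is $g\in\mathrm{FVL}\langle L\rangle$ with $0<g\le f$. A lattice $L$ is countably order bounded if for every countable $A\subseteq L$ there are $a,b\in L$ with $a\le x\le b$ for all $x\in A$. *)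

(* Defs.v *)
From Stdlib Require Import Reals.
From mathcomp Require Import all_boot all_order.
Set Implicit Arguments. Unset Strict Implicit. Unset Printing Implicit Defensive.
Import Order.TTheory.

Local Open Scope R_scope.

Section FBL.
Variables (d : Order.disp_t) (L : distrLatticeType d).

Definition is_lat_hom (h : L -> R) : Prop :=
  (forall x : L, -1 <= h x <= 1) /\
  (forall x y : L, h (Order.meet x y) = Rmin (h x) (h y)) /\
  (forall x y : L, h (Order.join x y) = Rmax (h x) (h y)).

Definition Lstar := {h : L -> R | is_lat_hom h}.

Definition ev (s : Lstar) (x : L) : R := proj1_sig s x.

Definition delta (x : L) : Lstar -> R := fun s => ev s x.

Definition pos_hom (f : Lstar -> R) : Prop :=
  forall (s t : Lstar) (lam : R), 0 <= lam ->
    (forall x : L, ev t x = lam * ev s x) -> f t = lam * f s.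

Definition sumR (l : seq R) : R := foldr Rplus 0 l.

Definition norm_le (f : Lstar -> R) (e : R) : Prop :=
  forall l : seq Lstar,
    (forall x : L, sumR (map (fun s => Rabs (ev s x)) l) <= 1) ->
    sumR (map (fun s => Rabs (f s)) l) <= e.

Definition finite_norm (f : Lstar -> R) : Prop := exists M : R, norm_le f M.

Inductive FVL : (Lstar -> R) -> Prop :=
| FVL_zero : FVL (fun _ => 0)
| FVL_delta (x : L) : FVL (delta x)
| FVL_add (f g : Lstar -> R) : FVL f -> FVL g -> FVL (fun s => f s + g s)
| FVL_scal (c : R) (f : Lstar -> R) : FVL f -> FVL (fun s => c * f s)
| FVL_max (f g : Lstar -> R) : FVL f -> FVL g -> FVL (fun s => Rmax (f s) (g s))
| FVL_min (f g : Lstar -> R) : FVL f -> FVL g -> FVL (fun s => Rmin (f s) (g s)).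

Definition FBL (f : Lstar -> R) : Prop :=
  pos_hom f /\ finite_norm f /\
  forall eps : R, 0 < eps ->
    exists g, FVL g /\ norm_le (fun s => f s - g s) eps.

Definition strictly_pos (f : Lstar -> R) : Prop :=
  (forall s, 0 <= f s) /\ exists s, f s <> 0.

Definition FVL_order_dense : Prop :=
  forall f, FBL f -> strictly_pos f ->
    exists g, FVL g /\ strictly_pos g /\ forall s, g s <= f s.

Definition countable_set (A : L -> Prop) : Prop :=
  exists u : nat -> L, forall x, A x -> exists n, u n = x.

Definition countably_order_bounded : Prop :=
  forall A : L -> Prop, countable_set A ->
    exists a b : L, forall x, A x -> (a <= x)%O /\ (x <= b)%O.

End FBL.

(* Main.v *)
Require Import Defs.
From Stdlib Require Import Reals Lra Lia ClassicalEpsilon FunctionalExtensionality Classical.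
From Coquelicot Require Import Coquelicot.
From mathcomp Require Import all_boot all_order.
Import Order.TTheory.
Set Implicit Arguments. Unset Strict Implicit.

Local Open Scope R_scope.

Section Aux.
Variables (d : Order.disp_t) (L : distrLatticeType d).

Lemma ev_bound (s : Lstar L) x : -1 <= ev s x <= 1.
Proof. exact: (proj1 (proj2_sig s) x). Qed.

Lemma ev_meet (s : Lstar L) x y : ev s (Order.meet x y) = Rmin (ev s x) (ev s y).
Proof. exact: (proj1 (proj2 (proj2_sig s)) x y). Qed.

Lemma ev_mono (s : Lstar L) (x y : L) : (x <= y)%O -> ev s x <= ev s y.
Proof.
move=> H; have := ev_meet s x y; rewrite meet_l // => ->; apply Rmin_r.
Qed.

Lemma FVL_ext (f g : Lstar L -> R) : FVL f -> (forall s, f s = g s) -> FVL g.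
Proof.
move=> Hf Hfg; have -> : g = f by apply functional_extensionality => s; rewrite Hfg.
exact Hf.
Qed.

Lemma Rabs_Rmax a : Rabs a = Rmax a (-1 * a).
Proof. unfold Rabs, Rmax; destruct Rcase_abs; destruct Rle_dec; lra. Qed.

Lemma FVL_abs f : FVL f -> FVL (fun s : Lstar L => Rabs (f s)).
Proof.
move=> Hf; apply FVL_ext with (fun s => Rmax (f s) (-1 * f s)).
  by apply FVL_max => //; apply FVL_scal.
by move=> s; rewrite Rabs_Rmax.
Qed.

Lemma RminRmult p q r : 0 <= r -> Rmin (r * p) (r * q) = r * Rmin p q.
Proof.
move=> Hr; unfold Rmin; destruct (Rle_dec p q); destruct (Rle_dec (r * p) (r * q)); try lra.
- have : r * p <= r * q by apply Rmult_le_compat_l. lra.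
- have : r * q <= r * p by apply Rmult_le_compat_l; lra. lra.
Qed.

Definition supp (g : Lstar L -> R) (F : seq L) :=
  forall (s s' : Lstar L) c, 0 <= c -> (forall x, x \in F -> ev s' x = c * ev s x) ->
    g s' = c * g s.

Lemma FVL_supp g : FVL g -> exists F, supp g F.
Proof.
elim=> {g}.
- by exists [::] => s s' c _ _; ring.
- move=> x; exists [:: x] => s s' c _ H; rewrite /delta H //; exact: mem_head.
- move=> f g _ [F1 H1] _ [F2 H2]; exists (F1 ++ F2) => s s' c Hc H.
  rewrite (H1 s s' c Hc) ?(H2 s s' c Hc); first ring.
  + by move=> x Hx; apply H; rewrite mem_cat Hx orbT.
  + by move=> x Hx; apply H; rewrite mem_cat Hx.
- move=> k f _ [F1 H1]; exists F1 => s s' c Hc H; rewrite (H1 s s' c Hc H); ring.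
- move=> f g _ [F1 H1] _ [F2 H2]; exists (F1 ++ F2) => s s' c Hc H.
  rewrite (H1 s s' c Hc) ?(H2 s s' c Hc) ?RmaxRmult //.
  + by move=> x Hx; apply H; rewrite mem_cat Hx orbT.
  + by move=> x Hx; apply H; rewrite mem_cat Hx.
- move=> f g _ [F1 H1] _ [F2 H2]; exists (F1 ++ F2) => s s' c Hc H.
  rewrite (H1 s s' c Hc) ?(H2 s s' c Hc) ?RminRmult //.
  + by move=> x Hx; apply H; rewrite mem_cat Hx orbT.
  + by move=> x Hx; apply H; rewrite mem_cat Hx.
Qed.

Lemma norm_le_point h e : norm_le h e -> forall s : Lstar L, Rabs (h s) <= e.
Proof.
move=> H s; have := H [:: s]; rewrite /sumR /= Rplus_0_r; apply.
move=> x; rewrite Rplus_0_r; have := ev_bound s x; unfold Rabs; destruct Rcase_abs; lra.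
Qed.

Lemma lim_le y z : (forall k : nat, y <= z + 2 * / (INR k + 1)) -> y <= z.
Proof.
move=> H; apply Rnot_lt_le => Hlt.
have [N [HN HN0]] := archimed_cor1 ((y - z) / 2) ltac:(lra).
have HN' : 0 < INR N by apply lt_0_INR.
have : / (INR N + 1) < / INR N by apply Rinv_lt_contravar; nra.
have := H N; lra.
Qed.

End Aux.

Section Part1.
Variables (d : Order.disp_t) (L : distrLatticeType d).

Definition clamp y := Rmax (-1) (Rmin 1 y).

Lemma mono_min (phi : R -> R) : (forall u v, u <= v -> phi u <= phi v) ->
  forall u v, phi (Rmin u v) = Rmin (phi u) (phi v).
Proof.
move=> Hm u v; unfold Rmin; destruct (Rle_dec u v) as [h|h];
  destruct (Rle_dec (phi u) (phi v)) as [h'|h'] => //.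
- have := Hm _ _ h; lra.
- have : phi v <= phi u by apply Hm; lra. lra.
Qed.

Lemma mono_max (phi : R -> R) : (forall u v, u <= v -> phi u <= phi v) ->
  forall u v, phi (Rmax u v) = Rmax (phi u) (phi v).
Proof.
move=> Hm u v; unfold Rmax; destruct (Rle_dec u v) as [h|h];
  destruct (Rle_dec (phi u) (phi v)) as [h'|h'] => //.
- have := Hm _ _ h; lra.
- have : phi v <= phi u by apply Hm; lra. lra.
Qed.

Lemma scl_mono t : 0 < t -> forall u v, u <= v -> clamp (u / t) <= clamp (v / t).
Proof.
move=> Ht u v Huv; have : u / t <= v / t.
  by apply Rmult_le_compat_r => //; left; apply Rinv_0_lt_compat.
unfold clamp, Rmax, Rmin; repeat destruct Rle_dec; lra.
Qed.

Lemma scl_hom (s : Lstar L) t : 0 < t -> is_lat_hom (fun x => clamp (ev s x / t)).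
Proof.
move=> Ht; split; [|split].
- move=> x; unfold clamp, Rmax, Rmin; repeat destruct Rle_dec; lra.
- move=> x y; rewrite ev_meet; exact (@mono_min (fun u => clamp (u / t)) (scl_mono Ht) _ _).
- move=> x y; rewrite /ev (proj2 (proj2 (proj2_sig s))) -/(ev s x) -/(ev s y).
  exact (@mono_max (fun u => clamp (u / t)) (scl_mono Ht) _ _).
Qed.

Definition scl (s : Lstar L) t (Ht : 0 < t) : Lstar L := exist _ _ (scl_hom s Ht).

Lemma abs_between lo v hi : lo <= v <= hi -> Rabs v <= Rmax (Rabs lo) (Rabs hi).
Proof. unfold Rmax, Rabs; repeat destruct Rcase_abs; repeat destruct Rle_dec; lra. Qed.

Lemma part1 (HL : inhabited L) : countably_order_bounded L -> FVL_order_dense L.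
Proof.
move=> Hcob f [Hph [Hfn Happ]] [Hf0 [s0 Hs0]].
pose e (k : nat) := / (INR k + 1).
have He : forall k, 0 < e k.
  by move=> k; apply Rinv_0_lt_compat; have := pos_INR k; lra.
have Hex : forall k : nat, exists gF : (Lstar L -> R) * seq L,
    FVL gF.1 /\ norm_le (fun s => f s - gF.1 s) (e k) /\ supp gF.1 gF.2.
  move=> k; have [g [Hg Hn]] := Happ (e k) (He k).
  have [F HF] := FVL_supp Hg; by exists (g, F).
pose G k := proj1_sig (constructive_indefinite_description _ (Hex k)).
have HG : forall k, FVL (G k).1 /\ norm_le (fun s => f s - (G k).1 s) (e k) /\ supp (G k).1 (G k).2.
  move=> k; exact: (proj2_sig (constructive_indefinite_description _ (Hex k))).
pose gg k := (G k).1.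
pose FF k := (G k).2.
have Herr : forall k s, Rabs (f s - gg k s) <= e k.
  move=> k; exact: norm_le_point (proj1 (proj2 (HG k))).
destruct HL as [x0].
pose u n := match (unpickle n : option (nat * nat)) with
            | Some (k, i) => nth x0 (FF k) i | None => x0 end.
have [a [b Hab]] := Hcob (fun x => exists k, x \in FF k) (ex_intro _ u (fun x Hx =>
  match Hx with ex_intro k Hk => ex_intro _ (pickle (k, index x (FF k)))
   (etrans (f_equal (fun o => match o with Some (k, i) => nth x0 (FF k) i | None => x0 end)
     (pickleK (k, index x (FF k)))) (nth_index x0 Hk)) end)).
pose h s := Rmax (Rabs (ev s a)) (Rabs (ev s b)).
have Hh : FVL h.
  apply FVL_max; [exact: (FVL_abs (FVL_delta a))|exact: (FVL_abs (FVL_delta b))].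
have Hin : forall k x s, x \in FF k -> Rabs (ev s x) <= h s.
  move=> k x s Hx; have [H1 H2] := Hab x (ex_intro _ k Hx).
  apply abs_between; split; exact: ev_mono.
have Hh01 : forall s, 0 <= h s <= 1.
  move=> s; have := ev_bound s a; have := ev_bound s b; rewrite /h.
  unfold Rmax, Rabs; repeat destruct Rcase_abs; repeat destruct Rle_dec; lra.
have Hfs0 : 0 < f s0 by have := Hf0 s0; lra.
pose eps := f s0 / 2.
have Heps : 0 < eps by rewrite /eps; lra.
have [N [HN HN0]] := archimed_cor1 eps Heps.
have HenN : e N < eps.
  have HN' : 0 < INR N by apply lt_0_INR.
  have : / (INR N + 1) < / INR N by apply Rinv_lt_contravar; nra.
  rewrite /e; lra.
have Hsupp : forall k, supp (gg k) (FF k) by move=> k; exact: (proj2 (proj2 (HG k))).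
have ClaimA : forall s, gg N s + - eps * h s <= f s.
  move=> s; have [Ht|Ht] : 0 < h s \/ h s = 0 by have := Hh01 s; lra.
  - set t := h s in Ht *; pose s' := scl s Ht.
    have Hk : forall k, gg k s = t * gg k s'.
      move=> k; rewrite (Hsupp k s s' (/ t)); last first.
      + move=> x Hx; rewrite /s' /scl /ev /= -/(ev s x).
        have := Hin k x s Hx; rewrite -/t => Hx'.
        have Hd : -1 <= ev s x / t <= 1.
          split.
          * apply Rmult_le_reg_r with t => //; unfold Rdiv; rewrite Rmult_assoc Rinv_l; [|lra].
            move: Hx'; unfold Rabs; destruct Rcase_abs; lra.
          * apply Rmult_le_reg_r with t => //; unfold Rdiv; rewrite Rmult_assoc Rinv_l; [|lra].
            move: Hx'; unfold Rabs; destruct Rcase_abs; lra.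
        rewrite /clamp; unfold Rmax, Rmin; repeat destruct Rle_dec; unfold Rdiv; try lra; ring.
      + left; apply Rinv_0_lt_compat; exact Ht.
      + field; lra.
    have Ht1 : t <= 1 by have := Hh01 s; rewrite /t; lra.
    have Hlim : t * f s' <= f s.
      apply lim_le => k.
      have E1 := Herr k s; have E2 := Herr k s'; have E3 := Hk k.
      have : t * (f s' - gg k s') <= t * e k.
        apply Rmult_le_compat_l; [lra|]. move: E2; unfold Rabs; destruct Rcase_abs; lra.
      have : t * e k <= e k by have := He k; nra.
      move: E1; rewrite /e; unfold Rabs; destruct Rcase_abs; lra.
    have E2 := Herr N s'; have E3 := Hk N.
    have : t * (gg N s' - f s') <= t * e N.
      apply Rmult_le_compat_l; [lra|]. move: E2; unfold Rabs; destruct Rcase_abs; lra.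
    have : t * e N <= t * eps by apply Rmult_le_compat_l; lra.
    rewrite -/t; lra.
  - have Hz : gg N s = 0.
      rewrite (Hsupp N s s 0 (Rle_refl 0)); first ring.
      move=> x Hx; have := Hin N x s Hx; rewrite Ht; have := Rabs_pos (ev s x).
      move=> H1 H2; have : Rabs (ev s x) = 0 by lra.
      move/Rabs_eq_0 => ->; ring.
    rewrite Hz Ht; have := Hf0 s; lra.
exists (fun s => Rmax (gg N s + - eps * h s) 0).
split; [|split; [split|]].
- apply FVL_max; [apply FVL_add; [exact: (proj1 (HG N))|exact: FVL_scal]|exact: FVL_zero].
- move=> s; apply Rmax_r.
- exists s0; apply Rgt_not_eq; apply Rlt_le_trans with (gg N s0 + - eps * h s0); last by apply Rmax_l.
  have := Herr N s0; have := Hh01 s0; rewrite /eps => H1 H2.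
  have : f s0 / 2 * h s0 <= f s0 / 2 by nra.
  have Heps2 : f s0 = 2 * eps by rewrite /eps; lra.
  move: H2; rewrite -/eps; unfold Rabs; destruct Rcase_abs; lra.
- move=> s; apply Rmax_lub; [exact: ClaimA|exact: Hf0].
Qed.

End Part1.

Section Part2.
Variables (d : Order.disp_t) (L : distrLatticeType d).
Variables (u : nat -> L) (p : L).

Definition w (n : nat) := (1/2) ^ n.

Lemma w_pos n : 0 < w n.
Proof. apply pow_lt; lra. Qed.

Lemma w_le1 n : w n <= 1.
Proof. rewrite /w; elim: n => [|n IH] /=; lra. Qed.

Definition T (s : Lstar L) n := w n * Rabs (ev s (u n) - ev s p).

Lemma T_ge0 s n : 0 <= T s n.
Proof. apply Rmult_le_pos; [left; apply w_pos|apply Rabs_pos]. Qed.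

Lemma T_le s n : T s n <= 2 * w n.
Proof.
rewrite /T; have := ev_bound s (u n); have := ev_bound s p; have := w_pos n => H0 H1 H2.
have : Rabs (ev s (u n) - ev s p) <= 2 by unfold Rabs; destruct Rcase_abs; lra.
nra.
Qed.

Lemma ex_w2 : ex_series (fun n => 2 * w n).
Proof.
apply ex_series_ext with (fun n => (1/2) ^ n * 2); first by move=> n; rewrite /w Rmult_comm.
apply ex_series_scal_r; apply ex_series_geom; rewrite Rabs_pos_eq; lra.
Qed.

Lemma ex_T s : ex_series (T s).
Proof.
apply (@ex_series_le R_AbsRing R_CompleteNormedModule (T s) (fun n => 2 * w n)); last exact ex_w2.
move=> n; change (Rabs (T s n) <= 2 * w n); rewrite Rabs_pos_eq; [apply T_le|apply T_ge0].
Qed.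

Definition Ssum (s : Lstar L) := Series (T s).

Lemma Series_zero : Series (fun _ => 0) = 0.
Proof.
transitivity (0 * Series (fun _ => 0)); last ring.
rewrite -Series_scal_l; apply Series_ext => n; ring.
Qed.

Lemma Series_ge0 a : (forall n, 0 <= a n) -> ex_series a -> 0 <= Series a.
Proof.
move=> H He; rewrite -Series_zero; apply Series_le => // n; split; [lra|apply H].
Qed.

Lemma S_split s K : Ssum s = sum_f_R0 (T s) K + Series (fun k => T s (K.+1 + k)%coq_nat).
Proof. rewrite /Ssum (Series_incr_n (T s) K.+1) //; [lia|exact: ex_T]. Qed.

Lemma ex_tail s K : ex_series (fun k => T s (K.+1 + k)%coq_nat).
Proof. exact (proj1 (ex_series_incr_n (T s) K.+1) (ex_T s)). Qed.

Lemma tail_ge0 s K : 0 <= Series (fun k => T s (K.+1 + k)%coq_nat).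
Proof. apply Series_ge0; [move=> n; apply T_ge0|apply ex_tail]. Qed.

Lemma sum_ge_term (a : nat -> R) n : (forall k, 0 <= a k) -> a n <= sum_f_R0 a n.
Proof.
move=> H; case: n => [|n] /=; first lra.
have := cond_pos_sum a n H; lra.
Qed.

Lemma T_le_S s n : T s n <= Ssum s.
Proof.
rewrite (S_split s n); have := tail_ge0 s n; have := sum_ge_term n (T_ge0 s); lra.
Qed.

Lemma S_ge0 s : 0 <= Ssum s.
Proof. have := T_le_S s 0; have := T_ge0 s 0; lra. Qed.

Definition fC (s : Lstar L) := Rmax (Rabs (ev s p) - Ssum s) 0.

Lemma fC_ge0 s : 0 <= fC s.
Proof. apply Rmax_r. Qed.

Lemma fC_le s : fC s <= Rabs (ev s p).
Proof. rewrite /fC; apply Rmax_lub; have := S_ge0 s; have := Rabs_pos (ev s p); lra. Qed.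

Lemma fC_hom : pos_hom fC.
Proof.
move=> s t lam Hl Ht.
have HT : forall n, T t n = lam * T s n.
  move=> n; rewrite /T !Ht -Rmult_minus_distr_l Rabs_mult (Rabs_pos_eq lam) //; ring.
have HS : Ssum t = lam * Ssum s.
  by rewrite /Ssum -Series_scal_l; apply Series_ext.
rewrite /fC HS Ht Rabs_mult (Rabs_pos_eq lam) // -Rmult_minus_distr_l.
by rewrite -RmaxRmult // Rmult_0_r.
Qed.

Lemma sumR_le (F G : Lstar L -> R) l : (forall s, F s <= G s) ->
  sumR (map F l) <= sumR (map G l).
Proof. move=> H; elim: l => [|a l IH] /=; [lra|have := H a; lra]. Qed.

Lemma sumR_ge0 (F : Lstar L -> R) l : (forall s, 0 <= F s) -> 0 <= sumR (map F l).
Proof. move=> H; elim: l => [|a l IH] /=; [lra|have := H a; lra]. Qed.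

Lemma sumR_scal (F : Lstar L -> R) c l : sumR (map (fun s => c * F s) l) = c * sumR (map F l).
Proof. elim: l => [|a l IH] /=; [ring|rewrite IH; ring]. Qed.

Lemma sumR_plus (F G : Lstar L -> R) l :
  sumR (map (fun s => F s + G s) l) = sumR (map F l) + sumR (map G l).
Proof. elim: l => [|a l IH] /=; [ring|rewrite IH; ring]. Qed.

Lemma exchange (a : Lstar L -> nat -> R) l : (forall s, ex_series (a s)) ->
  ex_series (fun k => sumR (map (fun s => a s k) l)) /\
  sumR (map (fun s => Series (a s)) l) = Series (fun k => sumR (map (fun s => a s k) l)).
Proof.
move=> Ha; elim: l => [|s l [IH1 IH2]] /=.
- split; last by rewrite Series_zero.
  apply ex_series_ext with (fun n => (1/2) ^ n * 0); first by move=> n; rewrite Rmult_0_r.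
  apply ex_series_scal_r; apply ex_series_geom; rewrite Rabs_pos_eq; lra.
- split.
  + apply ex_series_ext with (fun k => plus (a s k) (sumR (map (fun s => a s k) l))); first by move=> k; reflexivity.
    exact: (@ex_series_plus R_AbsRing R_NormedModule _ _ (Ha s) IH1).
  + rewrite IH2 -Series_plus //.
Qed.


Lemma FVL_T n : FVL (fun s => T s n).
Proof.
apply FVL_ext with (fun s => w n * Rabs (delta (u n) s + -1 * delta p s)).
  apply FVL_scal; apply FVL_abs; apply FVL_add; [apply FVL_delta|apply FVL_scal; apply FVL_delta].
by move=> s; rewrite /T /delta; have -> : ev s (u n) + -1 * ev s p = ev s (u n) - ev s p by ring.
Qed.

Lemma FVL_P K : FVL (fun s => sum_f_R0 (T s) K).
Proof.
elim: K => [|K IH] /=; first exact: FVL_T.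
exact: (FVL_add IH (FVL_T K.+1)).
Qed.

Definition gK K (s : Lstar L) := Rmax (Rabs (ev s p) - sum_f_R0 (T s) K) 0.

Lemma FVL_gK K : FVL (gK K).
Proof.
apply FVL_ext with (fun s => Rmax (Rabs (delta p s) + -1 * sum_f_R0 (T s) K) ((fun _ => 0) s)).
  apply FVL_max; [apply FVL_add; [apply FVL_abs; apply FVL_delta|apply FVL_scal; apply FVL_P]|apply FVL_zero].
by move=> s; rewrite /gK /delta; f_equal; ring.
Qed.

Lemma sumT_le l n : (forall x : L, sumR (map (fun s => Rabs (ev s x)) l) <= 1) ->
  sumR (map (fun s => T s n) l) <= 2 * w n.
Proof.
move=> Hl; rewrite /T sumR_scal.
have : sumR (map (fun s => Rabs (ev s (u n) - ev s p)) l) <= 2.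
  apply Rle_trans with (sumR (map (fun s => Rabs (ev s (u n)) + Rabs (ev s p)) l)).
    apply sumR_le => s; have := Rabs_triang (ev s (u n)) (- ev s p); rewrite Rabs_Ropp; unfold Rminus; lra.
  rewrite sumR_plus; have := Hl (u n); have := Hl p; lra.
have := w_pos n; nra.
Qed.

Lemma Series_tailw K : Series (fun k => 2 * w (K.+1 + k)%coq_nat) = 4 * w K.+1
  /\ ex_series (fun k => 2 * w (K.+1 + k)%coq_nat).
Proof.
have E : forall k, 2 * w (K.+1 + k)%coq_nat = (1/2) ^ k * (2 * w K.+1).
  by move=> k; rewrite /w pow_add; ring.
have Hg : Rabs (1/2) < 1 by rewrite Rabs_pos_eq; lra.
split.
- rewrite (Series_ext _ _ E) Series_scal_r Series_geom //; field.
- apply ex_series_ext with (fun k => (1/2) ^ k * (2 * w K.+1)); first by move=> k; rewrite E.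
  by apply ex_series_scal_r; apply ex_series_geom.
Qed.

Lemma fC_FBL : FBL fC.
Proof.
split; [exact fC_hom|split].
- exists 1 => l Hl; apply Rle_trans with (sumR (map (fun s => Rabs (ev s p)) l)); last exact: Hl.
  apply sumR_le => s; rewrite Rabs_pos_eq; [apply fC_le|apply fC_ge0].
- move=> eps Heps.
  have [N HN] := pow_lt_1_zero (1/2) ltac:(rewrite Rabs_pos_eq; lra) (eps / 4) ltac:(lra).
  exists (gK N); split; first exact: FVL_gK.
  move=> l Hl.
  pose tl s := Series (fun k => T s (N.+1 + k)%coq_nat).
  apply Rle_trans with (sumR (map tl l)).
    apply sumR_le => s; rewrite /fC /gK.
    have := S_split s N; have := tail_ge0 s N; rewrite -/(tl s) => H1 H2.
    rewrite H2; unfold Rmax, Rabs; repeat destruct Rle_dec; repeat destruct Rcase_abs; lra.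
  have [Hex Heq] := @exchange (fun s k => T s (N.+1 + k)%coq_nat) l (fun s => ex_tail s N).
  rewrite /tl Heq.
  have [Hw1 Hw2] := Series_tailw N.
  apply Rle_trans with (Series (fun k => 2 * w (N.+1 + k)%coq_nat)).
    apply Series_le => // k; split.
    + apply sumR_ge0 => s; apply T_ge0.
    + exact: sumT_le.
  rewrite Hw1; have := HN N.+1 ltac:(lia); rewrite Rabs_pos_eq; last by (left; apply pow_lt; lra).
  rewrite /w; lra.
Qed.

End Part2.

Section Part2b.
Variables (d : Order.disp_t) (L : distrLatticeType d).

Lemma chain_hom (tot : forall x y : L, (x <= y)%O \/ (y <= x)%O) (h : L -> R) :
  (forall x, -1 <= h x <= 1) -> (forall x y, (x <= y)%O -> h x <= h y) -> is_lat_hom h.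
Proof.
move=> Hb Hm; split; [exact Hb|split] => x y; case: (tot x y) => Hxy.
- rewrite meet_l // Rmin_left //; exact: Hm.
- rewrite meet_r // Rmin_right //; exact: Hm.
- rewrite join_r // Rmax_right //; exact: Hm.
- rewrite join_l // Rmax_left //; exact: Hm.
Qed.

Lemma cst_hom (c : R) : -1 <= c <= 1 -> is_lat_hom (fun _ : L => c).
Proof.
move=> Hc; split; [by []|split] => x y; [unfold Rmin|unfold Rmax]; by destruct Rle_dec.
Qed.

Lemma contra_core (u : nat -> L) (p : L) (g : Lstar L -> R) F (s1 s : Lstar L) n :
  supp g F -> (forall s, g s <= fC u p s) -> 0 < g s1 ->
  (forall x, x \in F -> ev s x = w n / 2 * ev s1 x) ->
  ev s p = w n / 2 * ev s1 p -> Rabs (ev s (u n)) = 1 -> False.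
Proof.
move=> HF Hgf Hg1 HsF Hsp Hsu.
have Hgs : g s = w n / 2 * g s1.
  apply HF => //; have := w_pos n; lra.
have Hw := w_pos n; have Hw1 := w_le1 n.
have Hf : fC u p s = 0.
  rewrite /fC; have := T_le_S u p s n; rewrite /T Hsp => HT.
  have := Rabs_triang_inv (ev s (u n)) (w n / 2 * ev s1 p); rewrite Hsu => Htri.
  have Hb := ev_bound s1 p.
  have : Rabs (w n / 2 * ev s1 p) <= w n / 2.
    rewrite Rabs_mult Rabs_pos_eq; last lra.
    have : Rabs (ev s1 p) <= 1 by unfold Rabs; destruct Rcase_abs; lra.
    nra.
  move=> Hc.
  have : w n * (1 - w n / 2) <= w n * Rabs (ev s (u n) - w n / 2 * ev s1 p).
    apply Rmult_le_compat_l; lra.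
  move=> H2; unfold Rmax; destruct Rle_dec => //; nra.
have := Hgf s; rewrite Hf Hgs; nra.
Qed.

Lemma foldr_join_ge (p : L) F : (p <= foldr Order.join p F)%O /\
  forall x, x \in F -> (x <= foldr Order.join p F)%O.
Proof.
elim: F => [|a F [IH1 IH2]] /=; first by split => // x; rewrite in_nil.
split; first exact: le_trans IH1 (leUr _ _).
move=> x; rewrite in_cons => /orP [/eqP ->|Hx]; first exact: leUl.
exact: le_trans (IH2 x Hx) (leUr _ _).
Qed.

Lemma foldr_meet_le (p : L) F : (foldr Order.meet p F <= p)%O /\
  forall x, x \in F -> (foldr Order.meet p F <= x)%O.
Proof.
elim: F => [|a F [IH1 IH2]] /=; first by split => // x; rewrite in_nil.
split; first exact: le_trans (leIr _ _) IH1.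
move=> x; rewrite in_cons => /orP [/eqP ->|Hx]; first exact: leIl.
exact: le_trans (leIr _ _) (IH2 x Hx).
Qed.

Lemma part2 (HL : inhabited L) : (forall x y : L, (x <= y)%O \/ (y <= x)%O) ->
  FVL_order_dense L -> countably_order_bounded L.
Proof.
move=> tot Hd A [u Hu]; apply NNPP => Hnot.
destruct HL as [p].
have Hcase : (forall b, exists x, A x /\ ~ (x <= b)%O) \/ (forall a, exists x, A x /\ ~ (a <= x)%O).
  destruct (classic (forall b, exists x, A x /\ ~ (x <= b)%O)) as [H|H]; [by left|right].
  move=> a; apply NNPP => Ha; apply H => b; apply NNPP => Hb; apply Hnot; exists a, b => x Hx.
  split; apply NNPP => Hc; [apply Ha|apply Hb]; by exists x.
have Hc12 : -1 <= 1/2 <= 1 by lra.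
pose sc : Lstar L := exist _ _ (cst_hom Hc12).
have Hsp : strictly_pos (fC u p).
  split; first exact: fC_ge0.
  exists sc; rewrite /fC.
  have -> : Ssum u p sc = 0.
    rewrite /Ssum -(Series_zero); apply Series_ext => n; rewrite /T /ev /= Rminus_diag Rabs_R0; ring.
  rewrite /ev /= Rabs_pos_eq; last lra.
  unfold Rmax; destruct Rle_dec; lra.
have [g [Hg [[Hg0 [s1 Hs1]] Hgf]]] := Hd _ (fC_FBL u p) Hsp.
have Hg1 : 0 < g s1 by have := Hg0 s1; lra.
have [F HF] := FVL_supp Hg.
have Hbd1 := ev_bound s1.
case: Hcase => Hc.
- pose m := foldr Order.join p F.
  have [Hpm HFm] := foldr_join_ge p F.
  have [x [Ax Hxm]] := Hc m.
  have [n Hn] := Hu x Ax.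
  pose c := w n / 2.
  have Hc0 : 0 < c by have := w_pos n; rewrite /c; lra.
  have Hc1 : c <= 1/2 by have := w_le1 n; rewrite /c; lra.
  pose h z := if (z <= m)%O then c * ev s1 z else 1.
  have Hh : is_lat_hom h.
    apply chain_hom => //.
    + move=> z; rewrite /h; case: ifP => _; last lra.
      have := Hbd1 z; split; nra.
    + move=> z1 z2 Hz; rewrite /h; case: (boolP (z2 <= m)%O) => H2.
      * rewrite (le_trans Hz H2); apply Rmult_le_compat_l; [lra|exact: ev_mono].
      * case: ifP => _; last lra; have := Hbd1 z1; nra.
  pose s : Lstar L := exist _ h Hh.
  apply: (@contra_core u p g F s1 s n HF Hgf Hg1).
  + move=> z Hz; rewrite /ev /= /h (HFm z Hz) //.
  + rewrite /ev /= /h Hpm //.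
  + rewrite /ev /= /h Hn; have -> : (x <= m)%O = false by apply/negP. apply Rabs_R1.
- pose m := foldr Order.meet p F.
  have [Hpm HFm] := foldr_meet_le p F.
  have [x [Ax Hxm]] := Hc m.
  have [n Hn] := Hu x Ax.
  pose c := w n / 2.
  have Hc0 : 0 < c by have := w_pos n; rewrite /c; lra.
  have Hc1 : c <= 1/2 by have := w_le1 n; rewrite /c; lra.
  pose h z := if (m <= z)%O then c * ev s1 z else -1.
  have Hh : is_lat_hom h.
    apply chain_hom => //.
    + move=> z; rewrite /h; case: ifP => _; last lra.
      have := Hbd1 z; split; nra.
    + move=> z1 z2 Hz; rewrite /h; case: (boolP (m <= z1)%O) => H1.
      * rewrite (le_trans H1 Hz); apply Rmult_le_compat_l; [lra|exact: ev_mono].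
      * case: ifP => _; last lra; have := Hbd1 z2; nra.
  pose s : Lstar L := exist _ h Hh.
  apply: (@contra_core u p g F s1 s n HF Hgf Hg1).
  + move=> z Hz; rewrite /ev /= /h (HFm z Hz) //.
  + rewrite /ev /= /h Hpm //.
  + rewrite /ev /= /h Hn; have -> : (m <= x)%O = false by apply/negP. rewrite Rabs_Ropp; apply Rabs_R1.
Qed.

End Part2b.

Theorem mainTheorem8 (d : Order.disp_t) (L : distrLatticeType d) (HL : inhabited L) :
  (countably_order_bounded L -> FVL_order_dense L) /\
  ((forall x y : L, (x <= y)%O \/ (y <= x)%O) ->
     FVL_order_dense L -> countably_order_bounded L).
Proof.
split; [exact: part1|exact: part2].
Qed.
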